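(* Let $X$ be a shift space and let $C$ be a right asymptotic class of $X$. Then $$\omega(C)=\sum_{u\in LS_\omega(C)}\bigl(\ell_C(u)-1\bigr),$$ where the left-hand side is finite if and only if the right-hand side is finite.
   Context: $A$ is a finite alphabet; a shift space is a closed shift-invariant subset $X\subseteq A^{\mathbb Z}$. For $x\in A^{\mathbb Z}$ write $x^+=x_0x_1\cdots\in A^{\mathbb N}$ and $X^+=\{x^+:x\in X\}$. Two elements $x,y\in X$ are right asymptotically equivalent if there are shifts $x'=\sigma^i(x)$, $y'=\sigma^j(y)$ ($i,j\in\mathbb Z$) with $x'^+=y'^+$. Each equivalence class is a union of orbits; a right asymptotic class is an equivalence class containing more than one orbit. For such a class $C$, $\omega(C)=\mathrm{Card}(o(C))-1$ where $o(C)$ is the set of orbits contained in $C$ (possibly infinite). For $u\in X^+$, $\ell_C(u)=\mathrm{Card}\{a\in A: x^+=au \text{ for some } x\in C\}$, and $LS_\omega(C)$ is the set of right infinite words $u$ with $\ell_C(u)\ge 2$. *)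

(* Defs.v *)
From mathcomp Require Import all_boot.
From Stdlib Require Import ZArith List ClassicalEpsilon.
Set Implicit Arguments. Unset Strict Implicit. Unset Printing Implicit Defensive.

Section Shifts.
Variable A : finType.

Definition shiftk (k : Z) (x : Z -> A) : Z -> A := fun i => x (i + k)%Z.

(* closed in the product topology: every x all of whose central windows
   occur in elements of X belongs to X *)
Definition closed_set (X : (Z -> A) -> Prop) : Prop :=
  forall x, (forall n : nat, exists y, X y /\
     forall i : Z, (Z.abs i <= Z.of_nat n)%Z -> y i = x i) -> X x.

Definition shift_invariant (X : (Z -> A) -> Prop) : Prop :=
  forall x (k : Z), X x -> X (shiftk k x).

Definition shift_space (X : (Z -> A) -> Prop) : Prop :=
  closed_set X /\ shift_invariant X.

Definition rpart (x : Z -> A) : nat -> A := fun n => x (Z.of_nat n).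

Definition same_orbit (x y : Z -> A) : Prop := exists k : Z, forall i, y i = shiftk k x i.

Definition right_asym (x y : Z -> A) : Prop :=
  exists i j : Z, forall n : nat, rpart (shiftk i x) n = rpart (shiftk j y) n.

Definition right_asym_class (X C : (Z -> A) -> Prop) : Prop :=
  (exists x0, X x0 /\ forall y, C y <-> (X y /\ right_asym x0 y)) /\
  (exists x y, C x /\ C y /\ ~ same_orbit x y).

Definition orbit_card (C : (Z -> A) -> Prop) (n : nat) : Prop :=
  exists l : list (Z -> A), length l = n /\ Forall C l /\
    ForallOrdPairs (fun x y => ~ same_orbit x y) l /\
    forall x, C x -> Exists (fun y => same_orbit x y) l.

(* omega(C) = Card(o(C)) - 1, in N u {infinity} (None = infinity) *)
Definition omega_is (C : (Z -> A) -> Prop) (w : option nat) : Prop :=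
  match w with
  | Some n => orbit_card C n.+1
  | None => forall m, ~ orbit_card C m
  end.

Definition pbool (P : Prop) : bool :=
  if excluded_middle_informative P then true else false.

Definition ellC (C : (Z -> A) -> Prop) (u : nat -> A) : nat :=
  #|[pred a : A | pbool (exists x, C x /\ rpart x 0 = a /\
                          forall k : nat, rpart x k.+1 = u k)]|.

Definition ext_eq (u v : nat -> A) : Prop := forall k, u k = v k.

(* the sum over u in LS_omega(C) of (ell_C(u) - 1) equals n :
   LS_omega(C) is finite, enumerated (up to extensional equality,
   without repetition) by l, and the sum over l is n *)
Definition LS_sum (C : (Z -> A) -> Prop) (n : nat) : Prop :=
  exists l : list (nat -> A),
    ForallOrdPairs (fun u v => ~ ext_eq u v) l /\
    (forall u, In u l -> 2 <= ellC C u) /\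
    (forall u, 2 <= ellC C u -> exists v, In v l /\ ext_eq u v) /\
    sumn (map (fun u => ellC C u - 1) l) = n.

Definition LS_sum_is (C : (Z -> A) -> Prop) (w : option nat) : Prop :=
  match w with
  | Some n => LS_sum C n
  | None => forall m, ~ LS_sum C m
  end.

End Shifts.

(* Main.v *)
Require Import Defs.
From mathcomp Require Import all_boot.
From Stdlib Require Import ZArith List.
From Stdlib Require Import Lia FunctionalExtensionality Classical ClassicalEpsilon.
From mathcomp Require Import all_boot zify.
Set Implicit Arguments. Unset Strict Implicit. Unset Printing Implicit Defensive.

Section Gen.
Variable T : Type.

Lemma length_size (l : list T) : length l = size l.
Proof. by elim: l => //= a l ->. Qed.

Lemma sumn_app (l1 l2 : list nat) : sumn (l1 ++ l2)%list = sumn l1 + sumn l2.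
Proof. by elim: l1 => //= a l ->; rewrite addnA. Qed.

Lemma map_List (U : Type) (f : T -> U) (l : list T) : List.map f l = seq.map f l.
Proof. by elim: l => //= a l ->. Qed.

Lemma list_sum_le (E : T -> T -> Prop)
  (Esym : forall u v, E u v -> E v u)
  (Etrans : forall u v w, E u v -> E v w -> E u w)
  (g : T -> nat) (gE : forall u v, E u v -> g u = g v) (l1 l2 : list T) :
  ForallOrdPairs (fun u v => ~ E u v) l1 ->
  (forall u, In u l1 -> 0 < g u -> exists v, In v l2 /\ E u v) ->
  sumn (List.map g l1) <= sumn (List.map g l2).
Proof.
elim: l1 l2 => [|u l1 IH] l2 /=; first by [].
move=> Hf Hc; inversion Hf as [|a b Hu Hl]; subst.
case: (posnP (g u)) => [g0|gp].
  rewrite g0 add0n; apply: IH => // u' Hu'; apply: Hc; by right.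
have [v [Hv Euv]] := Hc u (or_introl erefl) gp.
have [l2a [l2b Hsp]] := in_split _ _ Hv; subst l2.
have -> : sumn (List.map g (l2a ++ v :: l2b)) = g v + sumn (List.map g (l2a ++ l2b)).
  rewrite !map_app !sumn_app /=; lia.
rewrite (gE _ _ Euv) leq_add2l; apply: IH => // u' Hu' gp'.
have [v' [Hv' Ev']] := Hc u' (or_intror Hu') gp'.
exists v'; split => //.
case: (in_app_or _ _ _ Hv') => [H|[H|H]]; try by apply: in_or_app; auto.
move: Ev'; rewrite -H => Ev'; exfalso.
have := proj1 (Forall_forall _ _) Hu u' Hu'; apply.
exact: (Etrans _ _ _ Euv (Esym _ _ Ev')).
Qed.

Lemma list_len_le (E : T -> T -> Prop)
  (Esym : forall u v, E u v -> E v u)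
  (Etrans : forall u v w, E u v -> E v w -> E u w) (l1 l2 : list T) :
  ForallOrdPairs (fun u v => ~ E u v) l1 ->
  (forall u, In u l1 -> exists v, In v l2 /\ E u v) ->
  length l1 <= length l2.
Proof.
move=> H1 H2.
have := @list_sum_le E Esym Etrans (fun _ => 1) (fun _ _ _ => erefl) l1 l2 H1 (fun u hu _ => H2 u hu).
suff Hl : forall l : list T, sumn (List.map (fun _ => 1) l) = length l by rewrite !Hl.
by elim => //= a l ->.
Qed.

Lemma ev_list (P : nat -> T -> Prop) (l : list T) :
  (forall x, In x l -> exists N0, forall N, N0 <= N -> P N x) ->
  exists N0, forall N, N0 <= N -> forall x, In x l -> P N x.
Proof.
elim: l => [|a l IH] H; first by exists 0.
have [Na Ha] := H a (or_introl erefl).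
have [Nl Hl] := IH (fun x hx => H x (or_intror hx)).
exists (maxn Na Nl) => N hN x [<-|hx].
  apply: Ha; apply: leq_trans hN; exact: leq_maxl.
apply: Hl => //; apply: leq_trans hN; exact: leq_maxr.
Qed.

Lemma list_choice (U : Type) (R : T -> U -> Prop) (l : list T) :
  (forall t, In t l -> exists u, R t u) -> exists l', Forall2 R l l'.
Proof.
elim: l => [|a l IH] H; first by exists nil.
have [u hu] := H a (or_introl erefl).
have [l' hl'] := IH (fun t ht => H t (or_intror ht)).
by exists (u :: l'); constructor.
Qed.

Lemma FOP_filter (P : T -> T -> Prop) (b : T -> bool) (l : list T) :
  ForallOrdPairs P l -> ForallOrdPairs P (List.filter b l).
Proof.
elim: l => [|a l IH] H //=; inversion H as [|a' l' Ha Hl]; subst.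
case: (b a); last by apply: IH.
constructor; last by apply: IH.
apply/Forall_forall => x /filter_In [hx _]; exact: (proj1 (Forall_forall _ _) Ha x hx).
Qed.

Lemma filter_len (b : T -> bool) (l : list T) :
  length (List.filter b l) + length (List.filter (fun x => ~~ b x) l) = length l.
Proof. elim: l => //= a l IH; case: (b a) => /=; lia. Qed.

Lemma FOP_ev (P : T -> T -> Prop) (Q : nat -> T -> T -> Prop) (l : list T) :
  (forall a b, P a b -> exists N0, forall N, N0 <= N -> Q N a b) ->
  ForallOrdPairs P l -> exists N0, forall N, N0 <= N -> ForallOrdPairs (Q N) l.
Proof.
move=> HPQ; elim: l => [|a l IH] H; first by exists 0 => N _; constructor.
inversion H as [|a' l' Ha Hl]; subst.
have [N1 H1] := IH Hl.
have [N2 H2] := @ev_list (fun N b => Q N a b) l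
   (fun x hx => HPQ a x (proj1 (Forall_forall _ _) Ha x hx)).
exists (maxn N1 N2) => N hN; constructor.
  apply/Forall_forall => x hx; apply: H2 => //; apply: leq_trans hN; exact: leq_maxr.
apply: H1; apply: leq_trans hN; exact: leq_maxl.
Qed.

Lemma FOP_uniq (U : eqType) (f : T -> U) (l : list T) :
  ForallOrdPairs (fun a b => f a <> f b) l -> uniq (seq.map f l).
Proof.
elim: l => [|a l IH] H //=; inversion H as [|a' l' Ha Hl]; subst.
rewrite IH // andbT; apply/negP => hin.
suff [b [hb eb]] : exists b, In b l /\ f a = f b.
  exact: (proj1 (Forall_forall _ _) Ha b hb eb).
elim: l hin {IH H Ha Hl} => [|c l IH] //=; rewrite in_cons => /orP[/eqP e|h].
  by exists c; split; [left|].
by have [b [hb eb]] := IH h; exists b; split; [right|].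
Qed.

End Gen.

Lemma FOP_Forall2 (T U : Type) (R : T -> U -> Prop) (P : T -> T -> Prop)
  (Q : U -> U -> Prop) (l : list T) (l' : list U) :
  Forall2 R l l' -> ForallOrdPairs P l ->
  (forall a b a' b', R a a' -> R b b' -> P a b -> Q a' b') -> ForallOrdPairs Q l'.
Proof.
move=> H2; elim: H2 => [|a a' l0 l0' Raa' H2 IH] H HPQ; first by constructor.
inversion H as [|x y Ha Hl]; subst; constructor; last by apply: IH.
clear IH Hl H; elim: H2 Ha => [|b b' l1 l1' Rbb' H3 IH3] Ha; first by constructor.
inversion Ha; subst; constructor; [exact: HPQ Raa' Rbb' _ | exact: IH3].
Qed.

Lemma FOP_uniq_seq (U : eqType) (s : seq U) :
  uniq s -> ForallOrdPairs (fun a b => a <> b) s.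
Proof.
elim: s => [|a s IH] /=; first by constructor.
move=> /andP[ha hs]; constructor; last exact: IH.
apply/Forall_forall => x hx e; subst x; move: ha; rewrite (_ : a \in s) //.
elim: s hx {IH hs} => //= b s IH [->|h]; rewrite in_cons ?eqxx //.
by rewrite IH ?orbT.
Qed.

Lemma pboolP (P : Prop) : reflect P (pbool P).
Proof. rewrite /pbool; case: excluded_middle_informative => h; by constructor. Qed.
Lemma pbool_T (P : Prop) : P -> pbool P = true.
Proof. by move/pboolP. Qed.
Lemma pbool_F (P : Prop) : ~ P -> pbool P = false.
Proof. by move=> h; apply/pboolP. Qed.

Lemma sum_pos (I : finType) (f : I -> nat) : 0 < \sum_i f i -> exists i, 0 < f i.
Proof.
case: (pickP (fun i => 0 < f i)) => [i hi|h]; first by exists i.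
rewrite big1 // => i _; by move: (h i); case: (f i).
Qed.

Lemma sum_le1 (I : finType) (b : I -> bool) :
  (forall p q, b p -> b q -> p = q) -> \sum_p (b p : nat) <= 1.
Proof.
move=> H; case: (pickP b) => [p bp|h].
  rewrite (bigD1 p) //= bp big1 // => q nq.
  case bq: (b q) => //; move: nq; by rewrite (H _ _ bq bp) eqxx.
by rewrite big1 // => i _; rewrite h.
Qed.

Lemma sum_nat_le1 (f : nat -> nat) N : (forall n, f n <= 1) ->
  (forall n m, 0 < f n -> 0 < f m -> n = m) -> \sum_(n < N) f n <= 1.
Proof.
move=> H1 H2; elim: N => [|N IH]; first by rewrite big_ord0.
rewrite big_ord_recr /=; case: (posnP (f N)) => [->|fp]; first by rewrite addn0.
rewrite big1 ?add0n // => i _; case: (posnP (f i)) => // fi.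
by have := H2 _ _ fi fp => e; move: (ltn_ord i); rewrite e ltnn.
Qed.

Lemma filter_seq (T : Type) (b : pred T) (l : list T) : List.filter b l = seq.filter b l.
Proof. by elim: l => //= a l ->. Qed.

Lemma FOP_map_in (T U : Type) (f : T -> U) (P : T -> T -> Prop) (Q : U -> U -> Prop) (l : list T) :
  ForallOrdPairs P l -> (forall a b, In a l -> In b l -> P a b -> Q (f a) (f b)) ->
  ForallOrdPairs Q (List.map f l).
Proof.
elim: l => [|a l IH] H HPQ /=; first by constructor.
inversion H as [|a' l' Ha Hl]; subst; constructor.
  apply/Forall_forall => y /in_map_iff [b [<- hb]].
  apply: HPQ; [left|right|] => //; exact: (proj1 (Forall_forall _ _) Ha b hb).
apply: IH => // x y hx hy; apply: HPQ; by right.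
Qed.

Lemma FOP_impl (T : Type) (P Q : T -> T -> Prop) (l : list T) :
  ForallOrdPairs P l -> (forall a b, P a b -> Q a b) -> ForallOrdPairs Q l.
Proof.
move=> H HPQ; have := @FOP_map_in T T id P Q l H (fun a b _ _ => HPQ a b).
by rewrite List.map_id.
Qed.

Lemma In_mem (T : eqType) (x : T) (s : seq T) : x \in s -> In x s.
Proof. elim: s => //= a s IH; rewrite in_cons => /orP[/eqP ->|h]; [by left|right; exact: IH]. Qed.

Lemma mem_In (T : eqType) (x : T) (s : seq T) : In x s -> x \in s.
Proof. elim: s => //= a s IH [->|h]; rewrite in_cons ?eqxx //; by rewrite IH ?orbT. Qed.

Lemma npbool (P : Prop) : ~~ pbool P -> ~ P.
Proof. by move=> h hp; move: h; rewrite pbool_T. Qed.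

Lemma len_le1 (T : Type) (R : T -> T -> Prop) (l : list T) :
  ForallOrdPairs (fun x y => ~ R x y) l -> (forall x y, In x l -> In y l -> R x y) -> length l <= 1.
Proof.
case: l => [|a [|c l']] //= hF hs.
inversion hF as [|a' l'' Ha _]; subst.
inversion Ha as [|? ? Hac _]; subst.
by exfalso; apply: Hac; apply: hs; [left|right; left].
Qed.

Lemma Forall2_r (T U : Type) (R : T -> U -> Prop) l l' :
  Forall2 R l l' -> forall y, In y l' -> exists x, In x l /\ R x y.
Proof.
elim=> [|a b l0 l0' hab h IH] y //= [<-|hy]; first by exists a; split; [left|].
by have [x [hx r]] := IH y hy; exists x; split; [right|].
Qed.

Lemma len_sum_gg (A : finType) (C : (Z -> A) -> Prop) (L : list (nat -> A)) :
  (forall u, In u L -> 1 < ellC C u) -> length L <= sumn (List.map (fun u => ellC C u - 1) L).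
Proof.
elim: L => //= a L IH h.
have := h a (or_introl erefl); have := IH (fun u hu => h u (or_intror hu)).
move: (sumn _) (ellC C a) (length L) => s e k; lia.
Qed.

Lemma arith_a (c D S s ly : nat) : c + D = 1 + S -> s <= S -> ly = c -> D = 0 -> s < ly.
Proof. lia. Qed.
Lemma arith_b (c D S s ly : nat) : c + D = 1 + S -> s <= S -> ly = c -> D <= 1 -> 0 < D -> s < ly.+1.
Proof. lia. Qed.

Section Main.
Variable A : finType.
Variables X C : (Z -> A) -> Prop.
Hypothesis HX : shift_space X.
Variable x0 : Z -> A.
Hypothesis X0 : X x0.
Hypothesis HCx : forall y, C y <-> X y /\ right_asym x0 y.

Definition W (u : nat -> A) := exists x, C x /\ forall n : nat, x (Z.of_nat n) = u n.
Definition Eext (u : nat -> A) (a : A) :=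
  exists x, C x /\ rpart x 0 = a /\ forall k, rpart x k.+1 = u k.
Definition shw (m : nat) (u : nat -> A) : nat -> A := fun n => u (n + m).
Definition wc (a : A) (u : nat -> A) : nat -> A := fun n => if n is k.+1 then u k else a.

Lemma ellE u : ellC C u = \sum_(a : A) pbool (Eext u a).
Proof.
rewrite /ellC -sum1_card big_mkcond /=; apply: eq_bigr => a _.
by rewrite inE; case: pbool.
Qed.

Lemma C_shift k x : C x -> C (shiftk k x).
Proof.
move/HCx => [hX [i [j H]]]; apply/HCx; split; first exact: (proj2 HX).
exists i, (j - k)%Z => n; rewrite H /rpart /shiftk.
by have -> : (Z.of_nat n + (j - k) + k = Z.of_nat n + j)%Z by lia.
Qed.

Lemma C_ext x y : C x -> (forall i, y i = x i) -> C y.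
Proof. by move=> hx e; have -> : y = x by apply: functional_extensionality. Qed.

Lemma C_x0 : C x0.
Proof. by apply/HCx; split => //; exists 0%Z, 0%Z. Qed.

Lemma W_ext u v : W u -> (forall n, v n = u n) -> W v.
Proof. by move=> hu e; have -> : v = u by apply: functional_extensionality. Qed.

Lemma W_shift m u : W u -> W (shw m u).
Proof.
move=> [x [hx H]]; exists (shiftk (Z.of_nat m) x); split; first exact: C_shift.
by move=> n; rewrite /shiftk /shw -H Nat2Z.inj_add.
Qed.

Lemma W_Eext a u : W (wc a u) <-> Eext u a.
Proof.
split=> [[x [hx H]]|[x [hx [H0 H]]]].
  by exists x; split => //; split => [|k]; rewrite /rpart H.
by exists x; split => // -[|n] /=; [exact: H0 | exact: H n].
Qed.

Lemma Eext_W u a : Eext u a -> W u.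
Proof.
move=> [x [hx [_ H]]]; exists (shiftk 1 x); split; first exact: C_shift.
by move=> n; rewrite /shiftk -H /rpart Nat2Z.inj_succ.
Qed.

Lemma W_ell u : W u -> 0 < ellC C u.
Proof.
move=> [x [hx H]]; rewrite ellE.
have he : Eext u (x (-1)%Z).
  exists (shiftk (-1) x); split; first exact: C_shift.
  split; first by [].
  by move=> k; rewrite /rpart /shiftk -H; congr x; lia.
by rewrite (bigD1 (x (-1)%Z)) //= pbool_T.
Qed.

Lemma shw0 u : shw 0 u = u.
Proof. by apply: functional_extensionality => n; rewrite /shw addn0. Qed.
Lemma shwS m a u : shw m.+1 (wc a u) = shw m u.
Proof. by apply: functional_extensionality => n; rewrite /shw addnS. Qed.
Lemma shw_shw m k u : shw m (shw k u) = shw (m + k) u.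
Proof. by apply: functional_extensionality => n; rewrite /shw addnA. Qed.

Fixpoint Win (N : nat) : finType := if N is n.+1 then (A * Win n)%type else unit.
Fixpoint cw (N : nat) : Win N -> (nat -> A) -> nat -> A :=
  match N as N0 return Win N0 -> (nat -> A) -> nat -> A with 0 => fun _ z => z
  | n.+1 => fun (p : A * Win n) z k => match k with 0 => p.1 | k'.+1 => cw p.2 z k' end end.
Fixpoint prefW (N : nat) (u : nat -> A) : Win N :=
  match N as N0 return Win N0 with 0 => tt | n.+1 => (u 0, prefW n (shw 1 u)) end.

Lemma cw_cons N (a : A) (w : Win N) u : cw ((a, w) : Win N.+1) u = wc a (cw w u).
Proof. by apply: functional_extensionality => -[]. Qed.

Lemma cw_consS N (w : Win N.+1) u : cw w u = wc w.1 (cw (w.2 : Win N) u).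
Proof. by apply: functional_extensionality => -[]. Qed.

Lemma cw_shift N (w : Win N) u : shw N (cw w u) = u.
Proof.
elim: N w => [|N IH] w; first exact: shw0.
rewrite cw_consS shwS; exact: IH.
Qed.

Lemma cw_inj N (w w' : Win N) u : cw w u = cw w' u -> w = w'.
Proof.
elim: N w w' => [|N IH] w w'; first by case: w; case: w'.
rewrite (cw_consS w) (cw_consS w') => e.
have ea : w.1 = w'.1 by have := congr1 (fun f => f 0) e.
have ew : (w.2 : Win N) = w'.2.
  apply: IH; apply: functional_extensionality => k.
  exact: (congr1 (fun f => f k.+1) e).
by move: ea ew; clear e; case: w => a w; case: w' => a' w' /= -> ->.
Qed.

Lemma prefW_cw N u : cw (prefW N u) (shw N u) = u.
Proof.
elim: N u => [|N IH] u; first by rewrite shw0.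
rewrite cw_consS; apply: functional_extensionality => -[|k] //=.
have -> : shw N.+1 u = shw N (shw 1 u) by rewrite shw_shw addn1.
by rewrite IH /shw addn1.
Qed.

Lemma sumS N (F : Win N.+1 -> nat) :
  \sum_(w : Win N.+1) F w = \sum_(a : A) \sum_(w : Win N) F (a, w).
Proof. rewrite pair_big /=. apply: eq_bigr => -[]//. Qed.

Lemma so_refl (x : Z -> A) : same_orbit x x.
Proof. by exists 0%Z => i; rewrite /shiftk Z.add_0_r. Qed.
Lemma so_sym (x y : Z -> A) : same_orbit x y -> same_orbit y x.
Proof. move=> [k hk]; exists (- k)%Z => i; rewrite /shiftk hk /shiftk; congr x; lia. Qed.
Lemma so_trans (x y w : Z -> A) : same_orbit x y -> same_orbit y w -> same_orbit x w.
Proof.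
move=> [k hk] [k' hk']; exists (k' + k)%Z => i; rewrite hk' /shiftk hk /shiftk; congr x; lia.
Qed.

Lemma pass_ev x : C x -> exists (I : nat) (j0 : Z), forall J, I <= J ->
  forall n : nat, x (Z.of_nat n + (j0 + Z.of_nat J))%Z = x0 (Z.of_nat n + Z.of_nat J)%Z.
Proof.
move/HCx => [_ [i [j H]]]; exists (Z.to_nat i), (j - i)%Z => J hJ n.
have := H (Z.to_nat (Z.of_nat n + Z.of_nat J - i)); rewrite /rpart /shiftk Z2Nat.id; last lia.
move=> e; have -> : (Z.of_nat n + (j - i + Z.of_nat J) = Z.of_nat n + Z.of_nat J - i + j)%Z by lia.
rewrite -e; congr x0; lia.
Qed.

Section Base.
Variable J : nat.
Definition z : nat -> A := fun n => x0 (Z.of_nat n + Z.of_nat J)%Z.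
Lemma Wz : W z.
Proof. by exists (shiftk (Z.of_nat J) x0); split; [exact: C_shift C_x0|]. Qed.

Definition Can N (w : Win N) := W (cw w z) /\ forall m, m < N -> shw m (cw w z) <> z.
Definition canb N (w : Win N) : bool := pbool (Can w).
Definition cnt N := \sum_(w : Win N) (canb w : nat).
Definition gg (u : nat -> A) := ellC C u - 1.
Definition G N := \sum_(w : Win N) canb w * gg (cw w z).
Definition dd N := \sum_(w : Win N) \sum_(a : A)
   (pbool (Can w /\ Eext (cw w z) a /\ wc a (cw w z) = z) : nat).

Lemma Can_S N (w : Win N.+1) :
  Can w <-> Can (w.2 : Win N) /\ Eext (cw (w.2 : Win N) z) w.1 /\ wc w.1 (cw (w.2 : Win N) z) <> z.
Proof.
rewrite /Can cw_consS; split.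
  move=> [hW hm]; have hE := proj1 (W_Eext _ _) hW.
  split; [split; first exact: Eext_W hE|split => //].
    by move=> m hm'; rewrite -(shwS m w.1); apply: hm.
  by move=> e; apply: (hm 0) => //; rewrite shw0.
move=> [[hW hm] [hE hne]]; split; first exact/W_Eext.
by case=> [_|m hm']; [rewrite shw0|rewrite shwS; apply: hm].
Qed.

Lemma cnt_rec N : cnt N.+1 + dd N = cnt N + G N.
Proof.
have L : cnt N.+1 + dd N = \sum_(a : A) \sum_(w : Win N)
    (canb ((a, w) : Win N.+1) + pbool (Can w /\ Eext (cw w z) a /\ wc a (cw w z) = z)).
  rewrite /cnt /dd sumS [X in _ + X]exchange_big -big_split /=.
  by apply: eq_bigr => a _; rewrite -big_split.
have R : cnt N + G N = \sum_(a : A) \sum_(w : Win N) canb w * pbool (Eext (cw w z) a).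
  rewrite exchange_big /cnt /G -big_split /=; apply: eq_bigr => w _.
  rewrite -big_distrr /= -ellE.
  rewrite /canb; case: (pboolP (Can w)) => h //=; rewrite /gg.
  have := W_ell (proj1 h); lia.
rewrite L R; apply: eq_bigr => a _; apply: eq_bigr => w _.
have HS := Can_S ((a, w) : Win N.+1); simpl in HS.
rewrite /canb.
case: (pboolP (Can ((a, w) : Win N.+1))) => h1;
case: (pboolP (Can w /\ Eext (cw w z) a /\ wc a (cw w z) = z)) => h2;
case: (pboolP (Can w)) => h3; case: (pboolP (Eext (cw w z) a)) => h4 /=;
  first [done | exfalso; tauto].
Qed.

Lemma cnt0 : cnt 0 = 1.
Proof.
rewrite /cnt (big_pred1 tt); last by case.
by rewrite /canb pbool_T //; split; [exact: Wz|by []].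
Qed.

Lemma tele N : cnt N + \sum_(n < N) dd n = 1 + \sum_(n < N) G n.
Proof.
elim: N => [|N IH]; first by rewrite !big_ord0 cnt0.
rewrite !big_ord_recr /=.
by rewrite [_ + dd N]addnC addnA cnt_rec addnAC IH -addnA.
Qed.
Lemma dd_pos N : 0 < dd N ->
  shw N.+1 z = z /\ forall m, 0 < m -> m <= N -> shw m z <> z.
Proof.
rewrite /dd => /sum_pos [w]. move=> /sum_pos [a]. case: (pboolP (Can w /\ Eext (cw w z) a /\ wc a (cw w z) = z)) => // -[[hW hm] [hE hQ]] _.
have e1 : cw w z = shw 1 z by rewrite -[in RHS]hQ shwS shw0.
split.
  by rewrite -{1}hQ shwS cw_shift.
case=> // m _ hmN; rewrite -addn1 -shw_shw -e1; apply: hm; exact: hmN.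
Qed.

Lemma dd_le1 N : dd N <= 1.
Proof.
rewrite /dd pair_big /=; apply: sum_le1 => -[w a] [w' a'] /=.
move=> /pboolP [_ [_ h1]] /pboolP [_ [_ h2]].
have ea : a = a' by have := congr1 (fun f => f 0) (etrans h1 (esym h2)).
subst a'; have e : cw w z = cw w' z.
  apply: functional_extensionality => k.
  exact: (congr1 (fun f => f k.+1) (etrans h1 (esym h2))).
by rewrite (cw_inj e).
Qed.

Lemma D_le1 N : \sum_(n < N) dd n <= 1.
Proof.
apply: sum_nat_le1; first exact: dd_le1.
move=> n m /dd_pos [pn hn] /dd_pos [pm hm].
case: (ltngtP n m) => // h; exfalso.
  by apply: (hm n.+1) => //.
by apply: (hn m.+1) => //.
Qed.

Lemma D_ge1 N q : 0 < q -> q <= N -> shw q z = z -> 1 <= \sum_(n < N) dd n.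
Proof.
move=> q0 qN hq.
have exP : exists q, (0 < q) && pbool (shw q z = z) by exists q; rewrite q0 pbool_T.
case: (ex_minnP exP) => p /andP[p0 /pboolP hp] pmin.
case: p p0 hp pmin => // p' _ hp pmin.
have e1 : cw (prefW p' (shw 1 z)) z = shw 1 z.
  have := prefW_cw p' (shw 1 z); rewrite shw_shw addn1 hp; exact.
have hQ : wc (z 0) (shw 1 z) = z.
  by apply: functional_extensionality => -[|k] //=; rewrite /shw addn1.
have hdd : 0 < dd p'.
  rewrite /dd (bigD1 (prefW p' (shw 1 z))) //= (bigD1 (z 0)) //= pbool_T //.
  rewrite /Can e1; split; last by split => //; apply/W_Eext; rewrite hQ; exact: Wz.
  split; first exact: W_shift Wz.
  move=> m hm e; have := pmin m.+1; rewrite ltn0Sn pbool_T.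
    by move=> /(_ isT); rewrite ltnS leqNgt hm.
  by rewrite -addn1 -shw_shw.
have hp'N : p' < N by apply: leq_trans qN; apply: pmin; rewrite q0 pbool_T.
rewrite (bigD1 (Ordinal hp'N)) //=; lia.
Qed.


Definition SS N := \sum_(n < N) G n.
Definition nodes N : list (nat -> A) :=
  List.map (fun p : {n : 'I_N & Win n} => cw (tagged p) z)
    (List.filter (fun p : {n : 'I_N & Win n} => canb (tagged p)) (index_enum {n : 'I_N & Win n})).

Lemma SS_nodes N : SS N = sumn (List.map gg (nodes N)).
Proof.
rewrite /SS /G /nodes.
transitivity (\sum_(n < N) \sum_(w : Win n | canb w) gg (cw w z)).
  apply: eq_bigr => n _; rewrite [RHS]big_mkcond /=; apply: eq_bigr => w _.
  by case: (canb w); rewrite ?mul1n ?mul0n.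
rewrite (@sig_big_dep _ _ _ _ (fun n : 'I_N => Win n) (fun _ => true) (fun n w => canb w) (fun n w => gg (cw w z))) /=.
rewrite -big_filter !map_List filter_seq sumnE !big_map.
done.
Qed.

Lemma Can_inj n n' (w : Win n) (w' : Win n') : Can w -> Can w' -> cw w z = cw w' z -> n = n'.
Proof.
move=> [_ h] [_ h'] e.
case: (ltngtP n n') => // hn; exfalso.
  by apply: (h' n hn); rewrite -e cw_shift.
by apply: (h n' hn); rewrite e cw_shift.
Qed.

Lemma nodes_FOP N : ForallOrdPairs (fun u v => u <> v) (nodes N).
Proof.
rewrite /nodes; apply: (FOP_map_in (P := fun a b => a <> b)).
  rewrite filter_seq; apply: FOP_uniq_seq; rewrite filter_uniq //; exact: index_enum_uniq.
move=> [n w] [n' w'] /filter_In [_ ha] /filter_In [_ hb] nab /= e.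
apply: nab; rewrite /canb /= in ha hb.
have en : nat_of_ord n = n' := Can_inj (elimT (pboolP _) ha) (elimT (pboolP _) hb) e.
have en' : n = n' by apply: ord_inj.
subst n'; by rewrite (cw_inj e).
Qed.

Lemma nodes_In N n (hn : n < N) (w : Win n) : Can w -> In (cw w z) (nodes N).
Proof.
move=> hw; apply/in_map_iff.
exists (existT (fun n : 'I_N => Win n) (Ordinal hn) w); split => //.
apply/filter_In; split; last by rewrite /canb pbool_T.
apply: In_mem; exact: mem_index_enum.
Qed.

Lemma In_nodes N u : In u (nodes N) -> exists n (w : Win n), Can w /\ u = cw w z.
Proof.
move/in_map_iff => [[n w] [<- /filter_In [_ h]]].
by exists n, w; split => //; apply/pboolP.
Qed.

Lemma ext_eqE (u v : nat -> A) : ext_eq u v <-> u = v.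
Proof. split => [h|->//]; exact: functional_extensionality. Qed.

Lemma UB_sum N (L : list (nat -> A)) :
  (forall u, 1 < ellC C u -> exists v, In v L /\ ext_eq u v) ->
  SS N <= sumn (List.map gg L).
Proof.
move=> hL; rewrite SS_nodes.
apply: (list_sum_le (E := @ext_eq A)).
- by move=> u v /ext_eqE ->.
- by move=> u v w /ext_eqE -> /ext_eqE ->.
- by move=> u v /ext_eqE ->.
- apply: (@FOP_impl _ (fun u v => u <> v)); first exact: nodes_FOP.
  by move=> a b h /ext_eqE.
- move=> u _ hu; apply: hL; rewrite /gg in hu; lia.
Qed.

Lemma LB_sum N (L : list (nat -> A)) :
  ForallOrdPairs (fun u v => ~ ext_eq u v) L ->
  (forall u, In u L -> exists n, n < N /\ exists w : Win n, Can w /\ cw w z = u) ->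
  sumn (List.map gg L) <= SS N.
Proof.
move=> hF hL; rewrite SS_nodes.
apply: (list_sum_le (E := @ext_eq A)) => //.
- by move=> u v /ext_eqE ->.
- by move=> u v w /ext_eqE -> /ext_eqE ->.
- by move=> u v /ext_eqE ->.
- move=> u hu _; have [n [hn [w [hw e]]]] := hL u hu.
  by exists (cw w z); split; [apply: nodes_In hw|rewrite e].
Qed.

Definition ps (x : Z -> A) (j : Z) := forall n : nat, x (Z.of_nat n + j)%Z = z n.
Fixpoint win (N : nat) (x : Z -> A) : Win N :=
  match N as N0 return Win N0 with 0 => tt | n.+1 => (x (- Z.of_nat n.+1)%Z, win n x) end.

Lemma cw_win N x : ps x 0 -> cw (win N x) z = fun k => x (Z.of_nat k - Z.of_nat N)%Z.
Proof.
move=> hx; elim: N => [|N IH].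
  apply: functional_extensionality => k /=; rewrite -(hx k) Z.add_0_r Z.sub_0_r //.
rewrite (cw_consS (win N.+1 x)) /= IH; apply: functional_extensionality => -[|k];
  rewrite /wc; cbv beta iota; congr x; lia.
Qed.

Lemma ps_shift j a x : ps (shiftk j x) a <-> ps x (a + j).
Proof.
split => h n; have := h n; rewrite /shiftk; by rewrite Z.add_assoc.
Qed.

Lemma Can_win N y : C y -> ps y 0 -> (forall j, (- Z.of_nat N <= j < 0)%Z -> ~ ps y j) ->
  Can (win N y).
Proof.
move=> hC h0 hj; rewrite /Can cw_win //; split.
  exists (shiftk (- Z.of_nat N) y); split; first exact: C_shift.
  by move=> n; rewrite /shiftk.
move=> m hm e; apply: (hj (Z.of_nat m - Z.of_nat N)%Z); first lia.
move=> n; have := congr1 (fun f => f n) e; rewrite /shw /= => <-; congr y; lia.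
Qed.

Lemma win_nopass N y : ps y 0 -> Can (win N y) ->
  forall j, (- Z.of_nat N <= j < 0)%Z -> ~ ps y j.
Proof.
move=> h0 [_ hC] j hjN hj; apply: (hC (Z.to_nat (j + Z.of_nat N))); first lia.
rewrite cw_win //; apply: functional_extensionality => n; rewrite /shw -(hj n).
congr y; lia.
Qed.

Lemma per_of_ps y a : ps y 0 -> ps y a -> (a < 0)%Z -> shw (Z.to_nat (- a)) z = z.
Proof.
move=> h0 ha hneg; apply: functional_extensionality => n; rewrite /shw.
rewrite -(ha (n + Z.to_nat (- a))) -(h0 n); congr y; lia.
Qed.

Lemma ps_step y j p : ps y j -> shw p z = z -> ps y (j + Z.of_nat p).
Proof.
move=> hj hp n; have := congr1 (fun f => f n) hp; rewrite /shw => <-.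
rewrite -(hj (n + p)); congr y; lia.
Qed.

Lemma pass_reach N p y j : 0 < p -> p <= N -> shw p z = z -> ps y j -> (j < 0)%Z ->
  exists j', (- Z.of_nat N <= j' < 0)%Z /\ ps y j'.
Proof.
move=> p0 pN hp; move: {2}(Z.to_nat (- j)) (leqnn (Z.to_nat (- j))) => m.
elim: m j => [|m IH] j hm hj hneg; first lia.
case: (Z_le_gt_dec (- Z.of_nat N) j) => hjN; first by exists j.
apply: (IH (j + Z.of_nat p)%Z); [lia| exact: ps_step | lia].
Qed.

Definition hper N := forall q, 0 < q -> shw q z = z -> exists p, 0 < p /\ p <= N /\ shw p z = z.

Lemma K1 N y j : ps y 0 -> Can (win N y) -> hper N -> ps y j -> (j < 0)%Z -> False.
Proof.
move=> h0 hc hp hj hneg.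
case: (Z_le_gt_dec (- Z.of_nat N) j) => hjN.
  by apply: (win_nopass h0 hc (j := j)) => //; lia.
have := per_of_ps h0 hj hneg => hq.
have [p [p0 [pN hpz]]] := hp (Z.to_nat (- j)) ltac:(lia) hq.
have [j' [hj' pj']] := pass_reach p0 pN hpz hj hneg.
exact: (win_nopass h0 hc hj' pj').
Qed.

Lemma K_same N y y' : ps y 0 -> ps y' 0 -> Can (win N y) -> Can (win N y') -> hper N ->
  same_orbit y y' -> win N y = win N y'.
Proof.
move=> h0 h0' hc hc' hp [k hk].
case: (Z.lt_trichotomy k 0) => [hneg|[e|hpos]].
- exfalso; apply: (K1 h0 hc hp (j := k)) => // n; rewrite -h0' hk /shiftk; congr y; lia.
- subst k; have -> : y' = y by apply: functional_extensionality => i; rewrite hk /shiftk Z.add_0_r.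
  done.
- exfalso; apply: (K1 h0' hc' hp (j := (- k)%Z)); last lia.
  move=> n; rewrite hk /shiftk -(h0 n); congr y; lia.
Qed.

Lemma zper p : shw p z = z -> forall n k, z (n + k * p) = z n.
Proof.
move=> hp n; elim=> [|k IH]; first by rewrite mul0n addn0.
by rewrite mulSn addnCA addnC -[z (_ + _)]/(shw p z (n + k * p)) hp.
Qed.

Lemma pi_exists p : 0 < p -> shw p z = z ->
  exists pi, C pi /\ ps pi 0 /\ forall i, pi (i + Z.of_nat p)%Z = pi i.
Proof.
move=> p0 hp.
pose pi := fun i : Z => z (Z.to_nat (i mod Z.of_nat p)).
have pv : forall (i : Z) (k : nat), (0 <= i + Z.of_nat k * Z.of_nat p)%Z ->
    pi i = z (Z.to_nat (i + Z.of_nat k * Z.of_nat p)).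
  move=> i k hik; rewrite /pi.
  have hd := Z_div_mod_eq_full i (Z.of_nat p).
  have hr := Z.mod_pos_bound i (Z.of_nat p) ltac:(lia).
  set r := (i mod Z.of_nat p)%Z in hd hr *; set q := (i / Z.of_nat p)%Z in hd *.
  have hqk : (0 <= q + Z.of_nat k)%Z by nia.
  have -> : Z.to_nat (i + Z.of_nat k * Z.of_nat p) = Z.to_nat r + Z.to_nat (q + Z.of_nat k) * p.
    apply: Nat2Z.inj; rewrite Nat2Z.inj_add Nat2Z.inj_mul !Z2Nat.id; nia.
  by rewrite zper.
exists pi; split; [|split].
- apply/HCx; split.
    apply: (proj1 HX) => n; exists (shiftk (Z.of_nat J + Z.of_nat n * Z.of_nat p) x0); split.
      exact: (proj2 HX).
    move=> i hi; rewrite (pv i n); last nia.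
    rewrite /z /shiftk Z2Nat.id; last nia.
    congr x0; lia.
  exists (Z.of_nat J), 0%Z => n; rewrite /rpart /shiftk (pv _ 0); last lia.
  rewrite Z.add_0_r; congr x0; lia.
- move=> n; rewrite (pv _ 0); last lia; congr z; lia.
- move=> i; rewrite /pi; congr z; congr Z.to_nat.
  have -> : (i + Z.of_nat p = i + 1 * Z.of_nat p)%Z by lia.
  exact: Z_mod_plus_full.
Qed.

Lemma pi_not_orbit N p pi y : 0 < p -> p <= N -> (forall i, pi (i + Z.of_nat p)%Z = pi i) ->
  ps y 0 -> Can (win N y) -> ~ same_orbit pi y.
Proof.
move=> p0 pN hpi h0 hc [k hk].
apply: (win_nopass h0 hc (j := (- Z.of_nat p)%Z)); first lia.
move=> n; rewrite -h0 !hk /shiftk -(hpi (Z.of_nat n + - Z.of_nat p + k)%Z); congr pi; lia.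
Qed.

Lemma node_of u t : W u -> shw t u = z -> exists n (w : Win n), n <= t /\ Can w /\ cw w z = u.
Proof.
move=> hu ht.
have exP : exists n, pbool (shw n u = z) by exists t; rewrite pbool_T.
case: (ex_minnP exP) => n /pboolP hn hmin.
exists n, (prefW n u); split; first by apply: hmin; rewrite pbool_T.
have e : cw (prefW n u) z = u by have := prefW_cw n u; rewrite hn.
split => //; rewrite /Can e; split => // m hm em.
by have := hmin m; rewrite pbool_T // => /(_ isT); rewrite leqNgt hm.
Qed.

Definition bnd x := exists K, forall j, ps x j -> (K <= j)%Z.

Lemma rep_bnd x j0 : C x -> ps x j0 -> bnd x ->
  exists y, C y /\ same_orbit x y /\ ps y 0 /\ forall j, (j < 0)%Z -> ~ ps y j.
Proof.
move=> hC h0 [K hK].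
have exP : exists m, pbool (ps x (K + Z.of_nat m)).
  exists (Z.to_nat (j0 - K)); apply: pbool_T.
  have -> : (K + Z.of_nat (Z.to_nat (j0 - K)) = j0)%Z by have := hK _ h0; lia.
  done.
case: (ex_minnP exP) => m /pboolP hm hmin.
exists (shiftk (K + Z.of_nat m) x); split; first exact: C_shift.
split; first by exists (K + Z.of_nat m)%Z.
split; first by apply/ps_shift; rewrite Z.add_0_l.
move=> j hj /ps_shift hp.
have hKj := hK _ hp.
have := hmin (Z.to_nat (j + Z.of_nat m)); rewrite pbool_T; last first.
  by have -> : (K + Z.of_nat (Z.to_nat (j + Z.of_nat m)) = j + (K + Z.of_nat m))%Z by lia.
move=> /(_ isT); lia.
Qed.

Lemma nonbnd_inf x : ~ bnd x -> forall K, exists j, ps x j /\ (j < K)%Z.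
Proof.
move=> nb K; apply: NNPP => h; apply: nb; exists K => j hj.
case: (Z_lt_le_dec j K) => // hjK; exfalso; apply: h; by exists j.
Qed.

Lemma nonbnd_per x : ~ bnd x -> exists q, 0 < q /\ shw q z = z.
Proof.
move=> nb; have [j1 [h1 _]] := nonbnd_inf nb 0; have [b [hb hbj]] := nonbnd_inf nb j1.
have py0 : ps (shiftk j1 x) 0 by apply/ps_shift; rewrite Z.add_0_l.
have pyb : ps (shiftk j1 x) (b - j1) by apply/ps_shift; rewrite Z.sub_add.
exists (Z.to_nat (- (b - j1))); split; first lia.
apply: per_of_ps py0 pyb _; lia.
Qed.

Lemma nonbnd_same x x' : ~ bnd x -> ~ bnd x' -> same_orbit x x'.
Proof.
move=> nb nb'.
have [j1 [h1 _]] := nonbnd_inf nb 0; have [j2 [h2 _]] := nonbnd_inf nb' 0.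
suff e : forall t, x (t + j1)%Z = x' (t + j2)%Z.
  exists (j1 - j2)%Z => i; rewrite /shiftk; have := e (i - j2)%Z.
  rewrite Z.sub_add => <-; congr x; lia.
move=> t.
have [b [hb hbt]] := nonbnd_inf nb (Z.min (t + j1) j1).
have [b' [hb' hbt']] := nonbnd_inf nb' (Z.min (t + j2) j2).
have hq : shw (Z.to_nat (- (b - j1))) z = z.
  apply: (@per_of_ps (shiftk j1 x)); [apply/ps_shift; rewrite Z.add_0_l //|apply/ps_shift; rewrite Z.sub_add //|lia].
have hq' : shw (Z.to_nat (- (b' - j2))) z = z.
  apply: (@per_of_ps (shiftk j2 x')); [apply/ps_shift; rewrite Z.add_0_l //|apply/ps_shift; rewrite Z.sub_add //|lia].
have E1 : x (t + j1)%Z = z (Z.to_nat (t + j1 - b)) by rewrite -(hb (Z.to_nat (t + j1 - b))); congr x; lia.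
have E2 : x' (t + j2)%Z = z (Z.to_nat (t + j2 - b')) by rewrite -(hb' (Z.to_nat (t + j2 - b'))); congr x'; lia.
rewrite E1 E2 -[in LHS]hq' -[in RHS]hq /shw; congr z; lia.
Qed.
End Base.

Lemma mem_map_In (U : eqType) (f : (Z -> A) -> U) (l : list (Z -> A)) w :
  w \in seq.map f l -> exists y, In y l /\ w = f y.
Proof.
elim: l => //= a l IH; rewrite in_cons => /orP[/eqP ->|h]; first by exists a; split; [left|].
by have [y [hy e]] := IH h; exists y; split; [right|].
Qed.

Lemma cnt_card J N : cnt J N = #|[pred w : Win N | canb J w]|.
Proof.
rewrite /cnt -sum1_card [RHS]big_mkcond /=; apply: eq_bigr => w _.
by rewrite inE; case: canb.
Qed.

Lemma uniq_cnt J N (s : seq (Win N)) : uniq s -> (forall w, w \in s -> canb J w) -> size s <= cnt J N.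
Proof.
move=> hu hs; rewrite cnt_card -(card_uniqP hu); apply: subset_leq_card.
by apply/subsetP => w hw; rewrite inE hs.
Qed.

Theorem UB (L : list (nat -> A)) (l : list (Z -> A)) :
  (forall u, 1 < ellC C u -> exists v, In v L /\ ext_eq u v) ->
  Forall C l -> ForallOrdPairs (fun x y => ~ same_orbit x y) l ->
  length l <= (sumn (List.map gg L)).+1.
Proof.
move=> hL hC hF.
have hCl : forall x, In x l -> C x := proj1 (Forall_forall _ _) hC.
have [J hJ] : exists J, forall x, In x l -> exists j, ps J x j.
  have H0 : forall x, In x l -> exists N0, forall N, N0 <= N -> exists j, ps N x j.
    move=> x hx; have [I [j0 H]] := pass_ev (hCl x hx).
    by exists I => J hIJ; exists (j0 + Z.of_nat J)%Z; apply: H.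
  have [J0 H] := ev_list H0.
  by exists J0; apply: H.
have hlen := filter_len (fun x => pbool (bnd J x)) l.
have hF1 := FOP_filter (fun x => pbool (bnd J x)) hF.
have hF2 := FOP_filter (fun x => ~~ pbool (bnd J x)) hF.
have hs2 : forall x y, In x (List.filter (fun x => ~~ pbool (bnd J x)) l) ->
    In y (List.filter (fun x => ~~ pbool (bnd J x)) l) -> same_orbit x y.
  move=> x y /filter_In [_ hx] /filter_In [_ hy]; apply: nonbnd_same; [exact: npbool hx|exact: npbool hy].
have hl2 := len_le1 hF2 hs2.
move: hlen hF1 hF2 hs2 hl2.
move El1 : (List.filter (fun x => pbool (bnd J x)) l) => l1.
move El2 : (List.filter (fun x => ~~ pbool (bnd J x)) l) => l2.
move=> hlen hF1 hF2 hs2 hl2.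
have [ys hys] : exists ys, Forall2 (fun x y => C y /\ same_orbit x y /\ ps J y 0 /\
    forall j, (j < 0)%Z -> ~ ps J y j) l1 ys.
  apply: list_choice => x; rewrite -El1 => /filter_In [hx hbx].
  have [j hj] := hJ x hx; apply: (rep_bnd (hCl x hx) hj); exact/pboolP.
have hyF : ForallOrdPairs (fun y y' => (exists t, y t <> y' t) /\ ps J y 0 /\ ps J y' 0) ys.
  apply: (FOP_Forall2 hys hF1) => x x' y y' [_ [sxy [py _]]] [_ [sxy' [py' _]]] nso.
  split => //; apply: NNPP => h; apply: nso.
  apply: so_trans sxy _; apply: so_trans _ (so_sym sxy').
  exists 0%Z => i; rewrite /shiftk Z.add_0_r; apply: NNPP => ne; apply: h; exists i => e.
  by apply: ne; rewrite e.
have [N1 hN1] : exists N1, forall N, N1 <= N ->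
    ForallOrdPairs (fun y y' => win N y <> win N y') ys.
  apply: (FOP_ev _ hyF) => y y' [[t ht] [py py']].
  exists (Z.to_nat (- t)) => N hN e; apply: ht.
  case: (Z_lt_le_dec t 0) => htn.
    have := congr1 (fun f => f (Z.to_nat (t + Z.of_nat N))) (congr1 (fun w => cw w (z J)) e).
    rewrite /= (cw_win N py) (cw_win N py') Z2Nat.id; last lia.
    by rewrite Z.add_simpl_r.
  have := py (Z.to_nat t); have := py' (Z.to_nat t); rewrite Z.add_0_r Z2Nat.id // => -> ->.
  done.
have fin : forall N, N1 <= N -> (l2 <> nil -> 1 <= \sum_(n < N) dd J n) ->
    length l <= (sumn (List.map gg L)).+1.
  move=> N hN hD.
  have hys_len : length l1 = length ys := Forall2_length hys.
  have hcnt : length ys <= cnt J N.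
    rewrite length_size -(size_map (win N)); apply: uniq_cnt; first exact: FOP_uniq (hN1 N hN).
    move=> w /mem_map_In [y [hy ->]].
    have [x [_ [hCy [_ [py hnp]]]]] := Forall2_r hys hy.
    rewrite /canb pbool_T //; apply: Can_win => // j hj; apply: hnp; lia.
  have ht := tele J N; have hs := UB_sum J N hL; have hD1 := D_le1 J N.
  rewrite /SS in hs.
  move: hD hl2 hlen; case: l2 {El2 hF2 hs2} => [|a r] hD hl2 hlen; simpl in hl2, hlen.
    clear hD; move: ht hs; set D := \sum_(n < N) dd J n; set S := \sum_(n < N) G J n. move=> h1 h2.
    have h3 : D <= 1 by []. move: (cnt J N) h1 hcnt => c h1 hcnt. move: (length l) hlen => ll hlen. lia.
  have hD' := hD ltac:(discriminate); clear hD.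
  move: ht hs hD1 hD'; set D := \sum_(n < N) dd J n; set S := \sum_(n < N) G J n.
  move=> h1 h2 h3 h4; move: (cnt J N) h1 hcnt => c h1 hcnt.
  move: (length l) hlen => ll hlen; move: (length r) hl2 hlen => lr hl2 hlen; lia.
case: (classic (exists q, 0 < q /\ shw q (z J) = z J)) => [[q [q0 hq]]|np].
  apply: (fin (maxn N1 q)); first exact: leq_maxl.
  move=> _; apply: (D_ge1 q0 _ hq); exact: leq_maxr.
apply: (fin N1) => // hne; exfalso; apply: np.
have [x hx] : exists x, In x l2 by case: l2 {El2 hlen hF2 hs2 hl2 fin} hne => [|a r] // _; exists a; left.
move: hx; rewrite -El2 => /filter_In [_ hx]; apply: (@nonbnd_per J x); exact: npbool.
Qed.

Theorem LB (L : list (nat -> A)) :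
  ForallOrdPairs (fun u v => ~ ext_eq u v) L -> (forall u, In u L -> 1 < ellC C u) ->
  exists l, (sumn (List.map gg L)).+1 <= length l /\ Forall C l /\
    ForallOrdPairs (fun x y => ~ same_orbit x y) l.
Proof.
move=> hF hL.
have hW : forall u, In u L -> W u.
  move=> u hu; have := hL u hu; rewrite ellE => h.
  have [a] := sum_pos (ltnW h); case: (pboolP (Eext u a)) => // he _; exact: Eext_W he.
have [J hJ] : exists J, forall u, In u L -> exists t, shw t u = z J.
  have H0 : forall u, In u L -> exists N0, forall N, N0 <= N -> exists t, shw t u = z N.
    move=> u hu; have [x [hx hxu]] := hW u hu; have [I [j0 H]] := pass_ev hx.
    exists (maxn I (Z.to_nat (- j0))) => J hJ; exists (Z.to_nat (j0 + Z.of_nat J)).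
    apply: functional_extensionality => n; rewrite /shw -hxu.
    have hIJ : I <= J by apply: leq_trans hJ; exact: leq_maxl.
    rewrite /z -(H J hIJ n); congr x; lia.
  have [J0 H] := ev_list H0.
  by exists J0; apply: H.
have [N0 hN0] : exists N0, forall N, N0 <= N -> forall u, In u L ->
    exists n, n < N /\ exists w : Win n, Can J w /\ cw w (z J) = u.
  apply: ev_list => u hu; have [t ht] := hJ u hu.
  have [n [w [hn [hc he]]]] := node_of (hW u hu) ht.
  by exists n.+1 => N hN; exists n; split; [lia|exists w].
have fin : forall N, N0 <= N -> hper J N -> exists l, (sumn (List.map gg L)).+1 <= length l /\
    Forall C l /\ ForallOrdPairs (fun x y => ~ same_orbit x y) l.
  move=> N hN hp.
  pose ws := enum [pred w : Win N | canb J w].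
  have [ys hys] : exists ys, Forall2 (fun w y => Can J w /\ C y /\ ps J y 0 /\ win N y = w) ws ys.
    apply: list_choice => w /mem_In; rewrite mem_enum inE => /pboolP hc.
    have [x [hx hxu]] := proj1 hc.
    have p0 : ps J (shiftk (Z.of_nat N) x) 0.
      move=> n; rewrite /shiftk Z.add_0_r -Nat2Z.inj_add hxu.
      exact: (congr1 (fun f => f n) (cw_shift w (z J))).
    exists (shiftk (Z.of_nat N) x); split => //; split; first exact: C_shift.
    split => //; apply: (@cw_inj _ _ _ (z J)); rewrite (cw_win N p0).
    apply: functional_extensionality => k; rewrite /shiftk -hxu; congr x; lia.
  have hlen : length ys = cnt J N.
    by rewrite -(Forall2_length hys) length_size /ws cnt_card cardE.
  have hyF : ForallOrdPairs (fun x y => ~ same_orbit x y) ys.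
    apply: (FOP_Forall2 hys (FOP_uniq_seq (enum_uniq _))) =>
      w w' y y' [hc [_ [py ey]]] [hc' [_ [py' ey']]] nww' so.
    apply: nww'; rewrite -ey -ey'; apply: (K_same py py') => //; [rewrite ey|rewrite ey'] => //.
  have hyC : Forall C ys.
    by apply/Forall_forall => y hy; have [w [_ [_ [hC _]]]] := Forall2_r hys hy.
  have ht := tele J N; have hs := LB_sum hF (hN0 N hN); have hD1 := D_le1 J N.
  rewrite /SS in hs.
  case: (posnP (\sum_(n < N) dd J n)) => hD.
    exists ys; split; last by split.
    exact: (arith_a ht hs hlen hD).
  have [n hn] := sum_pos hD.
  have [hper _] := dd_pos hn.
  have [pi [hpi [pp0 hpip]]] := pi_exists (ltn0Sn n) hper.
  exists (pi :: ys); split.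
    exact: (arith_b ht hs hlen hD1 hD).
  split; first by constructor.
  constructor => //.
  apply/Forall_forall => y hy; have [w [_ [hc [_ [py ey]]]]] := Forall2_r hys hy.
  by apply: (pi_not_orbit (ltn0Sn n) (ltn_ord n) hpip py); rewrite ey.
case: (classic (exists q, 0 < q /\ shw q (z J) = z J)) => [[q [q0 hq]]|np].
  apply: (fin (maxn N0 q)); first exact: leq_maxl.
  move=> q' _ _; exists q; split => //; split => //; exact: leq_maxr.
apply: (fin N0) => // q' q0 hq; exfalso; apply: np; by exists q'.
Qed.

Lemma PH m l : orbit_card C m -> Forall C l ->
  ForallOrdPairs (fun x y => ~ same_orbit x y) l -> length l <= m.
Proof.
move=> [lc [hlen [hCc [_ hcov]]]] hC hF; rewrite -hlen.
apply: (list_len_le (E := @same_orbit A)) => //.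
- exact: so_sym.
- exact: so_trans.
- move=> u hu; have := hcov u (proj1 (Forall_forall _ _) hC u hu).
  by move/Exists_exists => [v [hv so]]; exists v.
Qed.

Lemma LS_orbit n : LS_sum C n -> orbit_card C n.+1.
Proof.
move=> [L [hF [h2 [hc hs]]]].
have [l [hl [hC hFl]]] := LB hF h2.
have hu := UB hc hC hFl.
have hs' : sumn (List.map gg L) = n by [].
rewrite hs' in hl hu.
exists l; split; first by apply/eqP; rewrite eqn_leq hu hl.
split => //; split => // x hx.
apply: NNPP => hne.
have hF2 : ForallOrdPairs (fun x y => ~ same_orbit x y) (x :: l).
  by constructor => //; exact: (proj2 (Forall_Exists_neg _ _) hne).
have := UB hc (Forall_cons x hx hC) hF2.
rewrite hs' /=; move: (length l) hl => k hk; lia.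
Qed.

Lemma orbit_LS m : orbit_card C m -> exists n, LS_sum C n.
Proof.
move=> hoc.
pose P k := pbool (exists L, ForallOrdPairs (fun u v => ~ ext_eq u v) L /\
   (forall u, In u L -> 1 < ellC C u) /\ length L = k).
have ex0 : exists k, P k by exists 0; apply: pbool_T; exists nil; split; [constructor|split].
have ub : forall k, P k -> k <= m.
  move=> k /pboolP [L [hF [h2 <-]]].
  have [l [hl [hC hFl]]] := LB hF h2.
  have := PH hoc hC hFl; have := len_sum_gg h2.
  rewrite /gg in hl; move: hl; move: (length L) (length l) (sumn _) => a b c hl; lia.
case: (ex_maxnP ex0 ub) => k /pboolP [L [hF [h2 hk]]] hmax.
exists (sumn (List.map gg L)), L; split => //; split => //; split => // u hu.
apply: NNPP => hne.
have : P k.+1.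
  apply: pbool_T; exists (u :: L); split.
    constructor => //; apply/Forall_forall => v hv he; apply: hne; by exists v.
  split; last by rewrite /= hk.
  by move=> v [<-|hv] //; exact: h2.
by move/hmax; rewrite ltnn.
Qed.

Lemma orbit_uniq m m' : orbit_card C m -> orbit_card C m' -> m = m'.
Proof.
move=> h h'; have [lc [hl [hC [hF _]]]] := h; have [lc' [hl' [hC' [hF' _]]]] := h'.
have := PH h hC' hF'; have := PH h' hC hF; rewrite hl hl'.
move=> a b; apply/eqP; rewrite eqn_leq a b //.
Qed.
End Main.

Theorem mainTheorem5 (A : finType) (X C : (Z -> A) -> Prop)
  (HX : shift_space X) (HC : right_asym_class X C) :
  forall w : option nat, omega_is C w <-> LS_sum_is C w.
Proof.
have [[x0 [X0 HCx]] _] := HC.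
case=> [n|]; rewrite /omega_is /LS_sum_is.
  split.
    move=> ho; have [n' hn'] := orbit_LS HX X0 HCx ho.
    have := orbit_uniq ho (LS_orbit HX X0 HCx hn'); case=> ->; done.
  move=> h; exact: (LS_orbit HX X0 HCx h).
split.
  move=> h m hm; exact: (h _ (LS_orbit HX X0 HCx hm)).
move=> h m hm; have [n hn] := orbit_LS HX X0 HCx hm; exact: (h n hn).
Qed.
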